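(* Let $p,q\in[1,\infty)$. Without assuming the Objectivity Assumption, the $L(p,q)$-aggregation method satisfies Consensus with score vectors: for every data set and every paper $a$, if all reviewers give $a$ the same recommendation $y$ ($y_{ia}=y$ for all $i$) and the same score vector ($\bar x_{ia}=\bar x_a$ for all $i$), then $s_a=y$.
   Context: Peer-review setting: a finite set $\mathcal{R}$ of reviewers, a finite set $\mathcal{P}$ of papers, and $d\ge1$ criteria. Every reviewer $i$ reviews every paper $a$, giving a score vector $\bar{x}_{ia}\in[0,10]^d$ and a recommendation $y_{ia}\in[0,10]$. A function $h:[0,10]^d\to[0,10]$ is monotonic if $\bar x\le\bar y$ componentwise implies $h(\bar x)\le h(\bar y)$. Standing assumption: each reviewer $i$ has a monotonic $h_i$ with $y_{ia}=h_i(\bar x_{ia})$ for all $a$. Score vectors of different reviewers for the same paper may differ (no Objectivity Assumption). The $L(p,q)$-aggregation method: (1) ERM step: find a monotonic $\hat h$ minimizing $\big[\sum_{i\in\mathcal{R}}\big(\sum_{a\in\mathcal{P}}|y_{ia}-h(\bar x_{ia})|^p\big)^{q/p}\big]^{1/q}$ over monotonic $h$ (only the values $h(\bar x_{ia})$ matter); among minimizers the value vector $(\hat h(\bar x_{ia}))_{i,a}$ of smallest Euclidean norm is chosen; set $\hat y_{ia}=\hat h(\bar x_{ia})$. (2) Aggregation step: the solution $(s_a)_{a\in\mathcal P}$ minimizes $\big[\sum_{i}\big(\sum_{a}|\hat y_{ia}-s_a|^p\big)^{q/p}\big]^{1/q}$ (ties broken by smallest Euclidean norm). *)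

(* Defs.v *)
From HB Require Import structures.
From mathcomp Require Import all_boot all_order all_algebra.
From mathcomp Require Import all_classical all_reals all_analysis.
Set Implicit Arguments. Unset Strict Implicit. Unset Printing Implicit Defensive.
Import Order.TTheory GRing.Theory Num.Theory.
Local Open Scope ring_scope.

Section PeerReview.
Variables (R : realType) (d : nat).

Definition in_cube (x : 'I_d -> R) : Prop := forall k, 0 <= x k <= 10.

Definition monotonic_score (h : ('I_d -> R) -> R) : Prop :=
  (forall x, in_cube x -> 0 <= h x <= 10) /\
  (forall x y, in_cube x -> in_cube y -> (forall k, x k <= y k) -> h x <= h y).

Variables (Rv Pp : finType).

Definition Lpq_loss (p q : R) (y v : Rv -> Pp -> R) : R :=
  (\sum_(i : Rv) (\sum_(a : Pp) `|y i a - v i a| `^ p) `^ (q / p)) `^ q^-1.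

Definition eucl_norm2 (v : Rv -> Pp -> R) : R :=
  Num.sqrt (\sum_(i : Rv) \sum_(a : Pp) v i a ^+ 2).

Definition eucl_norm1 (s : Pp -> R) : R :=
  Num.sqrt (\sum_(a : Pp) s a ^+ 2).

Definition realizable (x : Rv -> Pp -> 'I_d -> R) (v : Rv -> Pp -> R) : Prop :=
  exists h, monotonic_score h /\ forall i a, v i a = h (x i a).

Definition is_ERM_output (p q : R) (x : Rv -> Pp -> 'I_d -> R)
  (y : Rv -> Pp -> R) (yhat : Rv -> Pp -> R) : Prop :=
  [/\ realizable x yhat,
      (forall v, realizable x v -> Lpq_loss p q y yhat <= Lpq_loss p q y v) &
      (forall v, realizable x v -> Lpq_loss p q y v = Lpq_loss p q y yhat ->
         eucl_norm2 yhat <= eucl_norm2 v)].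

Definition is_agg_output (p q : R) (yhat : Rv -> Pp -> R) (s : Pp -> R) : Prop :=
  (forall t : Pp -> R, Lpq_loss p q yhat (fun _ => s) <= Lpq_loss p q yhat (fun _ => t)) /\
  (forall t : Pp -> R, Lpq_loss p q yhat (fun _ => t) = Lpq_loss p q yhat (fun _ => s) ->
     eucl_norm1 s <= eucl_norm1 t).

Definition valid_data (x : Rv -> Pp -> 'I_d -> R) (y : Rv -> Pp -> R) : Prop :=
  [/\ (forall i a, in_cube (x i a)), (forall i a, 0 <= y i a <= 10) &
      (forall i, exists h, monotonic_score h /\ forall a, y i a = h (x i a))].

End PeerReview.

(* Main.v *)
Require Import Defs.
From HB Require Import structures.
From mathcomp Require Import all_boot all_order all_algebra.
From mathcomp Require Import all_classical all_reals all_analysis.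
From mathcomp Require Import lra.
Import Order.TTheory GRing.Theory Num.Theory.
Local Open Scope ring_scope.

Lemma powR_strict (R : realType) (e u v : R) : 0 < e -> 0 <= u -> u < v -> u `^ e < v `^ e.
Proof. move=> he hu huv; apply: gt0_ltr_powR => //; rewrite ?inE /= ?nnegrE //; exact: ltW (le_lt_trans hu huv). Qed.

Lemma powR_mono (R : realType) (e u v : R) : 0 <= e -> 0 <= u -> u <= v -> u `^ e <= v `^ e.
Proof. move=> he hu huv; apply: ge0_ler_powR => //; rewrite ?inE /= ?nnegrE //; exact: le_trans hu huv. Qed.

Lemma loss_lt (R : realType) (Rv Pp : finType) (p q : R) (y v w : Rv -> Pp -> R)
  (hp : 0 < p) (hq : 0 < q) :
  (forall i b, `|y i b - v i b| <= `|y i b - w i b|) ->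
  forall i0 b0, `|y i0 b0 - v i0 b0| < `|y i0 b0 - w i0 b0| ->
  Lpq_loss p q y v < Lpq_loss p q y w.
Proof.
move=> hle i0 b0 hlt; rewrite /Lpq_loss.
have hqp : 0 < q / p by rewrite divr_gt0.
apply: powR_strict; first by rewrite invr_gt0.
  by apply: sumr_ge0 => i _; apply: powR_ge0.
rewrite [X in X < _](bigD1 i0) //= [X in _ < X](bigD1 i0) //=.
apply: ltr_leD.
  apply: powR_strict => //; first by apply: sumr_ge0 => b _; apply: powR_ge0.
  rewrite [X in X < _](bigD1 b0) //= [X in _ < X](bigD1 b0) //=.
  apply: ltr_leD; first by apply: powR_strict => //.
  by apply: ler_sum => b _; apply: powR_mono => //; exact: ltW.
apply: ler_sum => i _; apply: powR_mono; [exact: ltW | by apply: sumr_ge0 => b _; apply: powR_ge0|].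
by apply: ler_sum => b _; apply: powR_mono => //; exact: ltW.
Qed.

Lemma clamp_le (R : realType) (L U h y : R) : L <= y -> y <= U ->
  `|y - Order.max (Order.min h U) L| <= `|y - h|.
Proof.
move=> hL hU; set m := Order.max _ _.
have [hh|hh] := leP h y.
  have h1 : h <= m by rewrite /m le_max le_min lexx (le_trans hh hU).
  have h2 : m <= y by rewrite /m ge_max ge_min hh hL.
  rewrite !ger0_norm ?subr_ge0 //; lra.
have h1 : m <= h by rewrite /m ge_max ge_min lexx (le_trans hL (ltW hh)).
have h2 : y <= m by rewrite /m le_max le_min hU (ltW hh).
rewrite !ler0_norm ?subr_le0 //; [lra | exact: ltW].
Qed.

Lemma min_mono (R : realType) (a a' b b' : R) : a <= a' -> b <= b' ->
  Order.min a b <= Order.min a' b'.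
Proof. by move=> h1 h2; rewrite le_min !ge_min h1 h2 orbT. Qed.

Lemma max_mono (R : realType) (a a' b b' : R) : a <= a' -> b <= b' ->
  Order.max a b <= Order.max a' b'.
Proof. by move=> h1 h2; rewrite ge_max !le_max h1 h2 orbT. Qed.

Theorem proposition4p2 (R : realType) (d : nat) (Rv Pp : finType)
  (p q : R) (hp : 1 <= p) (hq : 1 <= q) (hd : (1 <= d)%N) (r0 : Rv)
  (x : Rv -> Pp -> 'I_d -> R) (y : Rv -> Pp -> R)
  (hdata : valid_data x y)
  (yhat : Rv -> Pp -> R) (hyhat : is_ERM_output p q x y yhat)
  (s : Pp -> R) (hs : is_agg_output p q yhat s)
  (a : Pp) (ya : R) (xa : 'I_d -> R)
  (hy : forall i, y i a = ya) (hx : forall i, x i a = xa) :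
  s a = ya.
Proof.
have p0 : 0 < p by apply: lt_le_trans hp.
have q0 : 0 < q by apply: lt_le_trans hq.
case: hdata => hcube hyr hmon.
case: hyhat => [[hh [[hhr hhm] hyh]] hmin _].
have xac : in_cube xa by rewrite -(hx r0).
have yar : 0 <= ya <= 10 by rewrite -(hy r0).
have hc : hh xa = ya.
  apply/eqP; apply/negP => /negP hne.
  pose Lf := fun z : 'I_d -> R => if `[< forall k, xa k <= z k >] then ya else 0.
  pose Uf := fun z : 'I_d -> R => if `[< forall k, z k <= xa k >] then ya else 10.
  pose h' := fun z => Order.max (Order.min (hh z) (Uf z)) (Lf z).
  have hL : forall z, 0 <= Lf z <= ya.
    by move=> z; rewrite /Lf; case: ifP => _; case/andP: yar => ? ?; rewrite ?lexx ?andbT.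
  have hU : forall z, ya <= Uf z <= 10.
    by move=> z; rewrite /Uf; case: ifP => _; case/andP: yar => ? ?; rewrite ?lexx ?andbT.
  have hreal : realizable x (fun i b => h' (x i b)).
    exists h'; split => //; split.
      move=> z zc; case/andP: (hhr z zc) => a1 a2; case/andP: (hL z) => l1 l2.
      case/andP: (hU z) => u1 u2; case/andP: yar => y1 y2.
      rewrite /h'; apply/andP; split.
        by rewrite le_max l1 orbT.
      by rewrite ge_max ge_min a2 (le_trans l2 y2).
    move=> z1 z2 c1 c2 hz.
    have e1 := hhm z1 z2 c1 c2 hz.
    have e2 : Lf z1 <= Lf z2.
      rewrite /Lf; case: (asboolP (forall k, xa k <= z1 k)) => H1.
        by rewrite asboolT ?lexx // => k; apply: le_trans (H1 k) (hz k).
      by case/andP: (hL z2).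
    have e3 : Uf z1 <= Uf z2.
      rewrite /Uf; case: (asboolP (forall k, z2 k <= xa k)) => H2.
        by rewrite asboolT ?lexx // => k; apply: le_trans (hz k) (H2 k).
      by case: ifP => _; [case/andP: yar | case/andP: (hU z1)].
    by rewrite /h'; apply: max_mono => //; apply: min_mono.
  have := hmin _ hreal; apply/negP; rewrite -ltNge.
  apply: (@loss_lt _ _ _ p q y _ yhat p0 q0 _ r0 a).
    move=> i b; rewrite hyh; apply: clamp_le.
      case: (hmon i) => hi [[hir him] hyi].
      have eya : ya = hi xa by rewrite -(hy i) -(hx i) hyi.
      rewrite /Lf; case: (asboolP (forall k, xa k <= x i b k)) => H.
        by rewrite eya hyi; apply: him => //; exact: hcube.
      by case/andP: (hyr i b).
    case: (hmon i) => hi [[hir him] hyi].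
    have eya : ya = hi xa by rewrite -(hy i) -(hx i) hyi.
    rewrite /Uf; case: (asboolP (forall k, x i b k <= xa k)) => H.
      by rewrite eya hyi; apply: him => //; exact: hcube.
    by case/andP: (hyr i b).
  rewrite hy hx hyh hx /h' /Lf /Uf.
  have E : `[< forall k, xa k <= xa k >] by apply/asboolP => k; exact: lexx.
  rewrite E max_r; last by rewrite ge_min lexx orbT.
  by rewrite subrr normr0 normr_gt0 subr_eq0 eq_sym.
rewrite -hc; apply/eqP; apply/negP => /negP hne.
pose t := fun b => if b == a then hh xa else s b.
case: hs => hs1 _.
have := hs1 t; apply/negP; rewrite -ltNge.
apply: (@loss_lt _ _ _ p q yhat (fun _ => t) (fun _ => s) p0 q0 _ r0 a).
  move=> i b; rewrite /t; case: eqP => [->|_] //.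
  by rewrite hyh hx subrr normr0 normr_ge0.
by rewrite /t eqxx hyh hx subrr normr0 normr_gt0 subr_eq0 eq_sym.
Qed.
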